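(* Assume $\mathrm{char}(\mathbb{F}_q)>3$. Then $\mathfrak{sl}_2(\mathbb{F}_q)$ has a COD, unique up to conjugacy, if and only if $q\equiv 1\pmod 4$.
   Context: $\mathbb{F}_q$ is the finite field with $q$ elements. $\mathfrak{sl}_n(\mathbb{F})$ denotes the Lie algebra of $n\times n$ traceless matrices over $\mathbb{F}$. A Cartan subalgebra is a nilpotent self-normalizing subalgebra. A classical Cartan subalgebra of $\mathfrak{L}=\mathfrak{sl}_n(\mathbb{F})$ (with $\ell=\mathrm{char}\,\mathbb{F}$) is an abelian Cartan subalgebra $H$ such that: (a) $\mathfrak{L}=\bigoplus_\alpha \mathfrak{L}_\alpha$ with $\mathfrak{L}_\alpha=\{x: [x,h]=\alpha(h)x\ \forall h\in H\}$ over linear functionals $\alpha$ on $H$ (roots); (b) for each root $\alpha\ne0$, $[\mathfrak{L}_\alpha,\mathfrak{L}_{-\alpha}]$ is one-dimensional; (c) for roots $\alpha,\beta$ with $\beta\neq0$, not all $\alpha+k\beta$ ($1\le k\le \ell-1$) are roots. The Killing form is $K(A,B)=2n\,\mathrm{Tr}(AB)$. A COD of $\mathfrak{sl}_n(\mathbb{F})$ is a vector space decomposition $\mathfrak{sl}_n(\mathbb{F})=H_0\oplus\cdots\oplus H_n$ into classical Cartan subalgebras that are pairwise orthogonal with respect to $K$. Two CODs are conjugate if there is a Lie algebra automorphism of $\mathfrak{sl}_n(\mathbb{F})$ mapping each component of the first decomposition onto exactly one component of the second. *)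

(* Defs.v *)
From HB Require Import structures.
From mathcomp Require Import all_boot all_order all_algebra all_field.
Set Implicit Arguments. Unset Strict Implicit. Unset Printing Implicit Defensive.
Import GRing.Theory.
Local Open Scope ring_scope.

Section COD.
Variables (F : finFieldType) (n : nat).
Local Notation M := 'M[F]_n.

Definition in_sl (x : M) : bool := \tr x == 0.

Definition lie (x y : M) : M := x *m y - y *m x.

Definition killing (x y : M) : F := (2 * n)%:R * \tr (x *m y).

Fixpoint rbr (x : M) (s : seq M) : M :=
  if s is y :: s' then lie x (rbr y s') else x.

Definition lie_subalg (H : {vspace M}) : Prop :=
  (forall x, x \in H -> in_sl x) /\
  (forall x y, x \in H -> y \in H -> lie x y \in H).

(* nilpotent: lower central series H^(k) = [H,H^(k-1)] vanishes *)
Definition lie_nilpotent (H : {vspace M}) : Prop :=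
  exists k, forall x s, size s = k -> x \in H -> all (fun y => y \in H) s ->
    rbr x s = 0.

Definition lie_abelian (H : {vspace M}) : Prop :=
  forall x y, x \in H -> y \in H -> lie x y = 0.

Definition self_normalizing (H : {vspace M}) : Prop :=
  forall x, in_sl x -> (forall h, h \in H -> lie x h \in H) -> x \in H.

Definition cartan (H : {vspace M}) : Prop :=
  lie_subalg H /\ lie_nilpotent H /\ self_normalizing H.

Definition lin_on (H : {vspace M}) (a : M -> F) : Prop :=
  forall c x y, x \in H -> y \in H -> a (c *: x + y) = c * a x + a y.

Definition wspace (H : {vspace M}) (a : M -> F) : {set M} :=
  [set x | in_sl x && [forall h, (h \in H) ==> (lie x h == a h *: x)]].

Definition is_root (H : {vspace M}) (a : M -> F) : Prop :=
  lin_on H a /\ exists2 x, x \in wspace H a & x != 0.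

Definition nonzero_on (H : {vspace M}) (a : M -> F) : Prop :=
  exists2 h, h \in H & a h != 0.

(* classical Cartan subalgebra, l = char F *)
Definition classical_cartan (l : nat) (H : {vspace M}) : Prop :=
  [/\ cartan H, lie_abelian H,
   (forall x, in_sl x -> exists s : seq ({ffun M -> F} * M),
        (forall p, p \in s -> lin_on H p.1 /\ p.2 \in wspace H p.1) /\
        x = \sum_(p <- s) p.2),
   (forall a, is_root H a -> nonzero_on H a ->
      \dim <<[seq lie x y | x <- enum (wspace H a),
                            y <- enum (wspace H (fun h => - a h))]>>%VS = 1%N) &
   (forall a b, is_root H a -> is_root H b -> nonzero_on H b ->
      ~ (forall k : nat, (1 <= k <= l - 1)%N ->
           is_root H (fun h => a h + k%:R * b h)))].

Definition COD (l : nat) (H : 'I_n.+1 -> {vspace M}) : Prop :=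
  [/\ forall x, in_sl x <-> x \in (\sum_i H i)%VS,
      directv (\sum_i H i)%VS,
      forall i, classical_cartan l (H i) &
      forall i j x y, i != j -> x \in H i -> y \in H j -> killing x y = 0].

Definition lie_aut (f : M -> M) : Prop :=
  [/\ forall x, in_sl x -> in_sl (f x),
      forall c x y, in_sl x -> in_sl y -> f (c *: x + y) = c *: f x + f y,
      forall x y, in_sl x -> in_sl y -> f (lie x y) = lie (f x) (f y),
      forall x y, in_sl x -> in_sl y -> f x = f y -> x = y &
      forall y, in_sl y -> exists2 x, in_sl x & f x = y].

Definition COD_conjugate (H H' : 'I_n.+1 -> {vspace M}) : Prop :=
  exists f, lie_aut f /\ exists sigma : 'I_n.+1 -> 'I_n.+1,
    forall i y, y \in H' (sigma i) <-> exists2 x, x \in H i & f x = y.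

End COD.

(* Main.v *)
Require Import Defs.
Set Implicit Arguments. Unset Strict Implicit.
From HB Require Import structures.
From mathcomp Require Import all_boot all_order all_algebra all_field.
From mathcomp Require Import ring zify.
From mathcomp Require Import cyclic.
Import GRing.Theory.
Local Open Scope ring_scope.

Section S.
Variable F : finFieldType.
Local Notation M := 'M[F]_2.
Local Notation o1 := (lift ord0 (ord0 : 'I_1)).

Lemma ord2P (i : 'I_2) : i = ord0 \/ i = o1.
Proof. case: i => [[|[|//]] Hi]; [left|right]; exact: val_inj. Qed.

Lemma tr2 (x : M) : \tr x = x ord0 ord0 + x o1 o1.
Proof. by rewrite /mxtrace !big_ord_recl big_ord0 addr0. Qed.

Ltac mx2 := apply/matrixP => i j; rewrite !mxE ?big_ord_recl ?big_ord0 ?mxE ?big_ord_recl ?big_ord0;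
  have [->|->] := ord2P i; have [->|->] := ord2P j; rewrite ?mxE /=.

Lemma anticomm (x y : M) : in_sl x -> in_sl y ->
  x *m y + y *m x = \tr (x *m y) *: 1%:M.
Proof.
rewrite /in_sl !tr2 => /eqP hx /eqP hy.
have ex : x o1 o1 = - x ord0 ord0 by apply/eqP; rewrite -addr_eq0 addrC hx.
have ey : y o1 o1 = - y ord0 ord0 by apply/eqP; rewrite -addr_eq0 addrC hy.
mx2; rewrite ?ex ?ey; ring.
Qed.

Variable p : nat.
Hypothesis hp : p \in [pchar F].
Hypothesis hp3 : (3 < p)%N.

Lemma two_neq0 : (2%:R : F) != 0.
Proof.
rewrite -(dvdn_pcharf hp); apply/negP => /(dvdn_leq (isT : (0 < 2)%N)) h2.
by move: hp3; rewrite ltnNge (leq_trans h2).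
Qed.

Lemma three_neq0 : (3%:R : F) != 0.
Proof.
rewrite -(dvdn_pcharf hp); apply/negP => /(dvdn_leq (isT : (0 < 3)%N)) h2.
by move: hp3; rewrite ltnNge h2.
Qed.


Lemma nondeg (x : M) : in_sl x -> x != 0 -> exists2 z, in_sl z & \tr (x *m z) != 0.
Proof.
rewrite /in_sl tr2 => /eqP hx xnz.
have ex : x o1 o1 = - x ord0 ord0 by apply/eqP; rewrite -addr_eq0 addrC hx.
have [h01|h01] := eqVneq (x ord0 o1) 0; last first.
  exists (delta_mx o1 ord0).
    by rewrite /in_sl tr2 !mxE /= addr0.
  by rewrite tr2 !mxE !big_ord_recl !big_ord0 !mxE /= !mulr0 !mulr1 !addr0 add0r.
have [h10|h10] := eqVneq (x o1 ord0) 0; last first.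
  exists (delta_mx ord0 o1).
    by rewrite /in_sl tr2 !mxE /= addr0.
  by rewrite tr2 !mxE !big_ord_recl !big_ord0 !mxE /= !mulr0 !mulr1 !addr0 add0r.
exists x; first by rewrite /in_sl tr2 hx.
rewrite tr2 !mxE !big_ord_recl !big_ord0 h01 h10 ex !mulr0 !addr0 add0r mulrNN.
have [h00|h00] := eqVneq (x ord0 ord0) 0.
  case/negP: xnz; apply/eqP/matrixP => i j; rewrite mxE.
  by have [->|->] := ord2P i; have [->|->] := ord2P j; rewrite ?ex ?h00 ?h01 ?h10 ?oppr0.
by rewrite -mulr2n -mulr_natl mulf_neq0 ?mulf_neq0 ?two_neq0.
Qed.

Lemma four_neq0 : (4%:R : F) != 0.
Proof. by rewrite (natrM _ 2 2) mulf_neq0 ?two_neq0. Qed.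

Lemma bad_val (b : F) : b ^+ 2 = 4%:R -> ~ (2%:R * b = 0 \/ (2%:R * b) ^+ 2 = 4%:R).
Proof.
move=> hb [/eqP|h].
  rewrite mulf_eq0 (negbTE two_neq0) /= => /eqP b0.
  by move: hb; rewrite b0 expr0n /= => /eqP; rewrite eq_sym (negbTE four_neq0).
move: h; rewrite exprMn hb expr2 -!natrM => /eqP; rewrite -subr_eq0 -natrB //.
have -> : (2 * 2 * 4 - 4 = 4 * 3)%N by [].
by rewrite (natrM _ 4 3) mulf_eq0 (negbTE four_neq0) (negbTE three_neq0).
Qed.

Lemma lieZr x k (y : M) : lie x (k *: y) = k *: lie x y.
Proof. by rewrite /lie -scalemxAr -scalemxAl scalerBr. Qed.
Lemma lieZl k x (y : M) : lie (k *: x) y = k *: lie x y.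
Proof. by rewrite /lie -scalemxAr -scalemxAl scalerBr. Qed.

Lemma in_slZ k (x : M) : in_sl x -> in_sl (k *: x).
Proof. by rewrite /in_sl mxtraceZ => /eqP ->; rewrite mulr0. Qed.
Lemma in_slD (x y : M) : in_sl x -> in_sl y -> in_sl (x + y).
Proof. by rewrite /in_sl mxtraceD => /eqP -> /eqP ->; rewrite addr0. Qed.

Lemma trB (x y : M) : \tr (x - y) = \tr x - \tr y.
Proof. by rewrite mxtraceD -scaleN1r mxtraceZ mulN1r. Qed.

Lemma tr1 : \tr (1%:M : M) = 2%:R.
Proof. exact: mxtrace1. Qed.

Section Sq1.
Variable g : M.
Hypothesis gsl : in_sl g.
Hypothesis gg : g *m g = 1%:M.

Lemma comm_line (x : M) : in_sl x -> x *m g = g *m x -> x = (\tr (x *m g) / 2%:R) *: g.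
Proof.
move=> xsl hc.
have h1 : (x *m g + x *m g) *m g = (\tr (x *m g) *: 1%:M) *m g.
  by rewrite {2}hc anticomm.
rewrite mulmxDl -!mulmxA gg mulmx1 -scalemxAl mul1mx in h1.
rewrite mulrC -scalerA -h1 -mulr2n -scaler_nat scalerA mulVf ?two_neq0 //.
by rewrite scale1r.
Qed.

Lemma memg h : reflect (exists k, h = k *: g) (h \in <[g]>%VS).
Proof. exact: vlineP. Qed.

Lemma trgg : \tr (g *m g) = 2%:R.
Proof. by rewrite gg tr1. Qed.

Lemma self_norm_g : self_normalizing <[g]>%VS.
Proof.
move=> x xsl hn.
have /memg [t ht] := hn g (memv_line g).
have : \tr (lie x g *m g) = 0.
  rewrite /lie mulmxBl -mulmxA gg mulmx1 trB.
  by rewrite mxtrace_mulC mulmxA gg mul1mx subrr.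
rewrite ht -scalemxAl mxtraceZ trgg => /eqP; rewrite mulf_eq0 (negbTE two_neq0) orbF => /eqP t0.
move: ht; rewrite t0 scale0r /lie => /eqP; rewrite subr_eq0 => /eqP hc.
rewrite (comm_line xsl hc); exact: memvZ (memv_line g).
Qed.


Lemma lie_line h h' : h \in <[g]>%VS -> h' \in <[g]>%VS -> lie h h' = 0.
Proof.
move=> /memg[k ->] /memg[k' ->]; by rewrite lieZl lieZr /lie subrr !scaler0.
Qed.

Lemma lin0 (a : M -> F) : lin_on <[g]>%VS a -> a 0 = 0.
Proof.
move=> la; have := la 1 0 0 (mem0v _) (mem0v _).
rewrite scale1r addr0 mul1r => /eqP; rewrite -{1}[a 0]addr0 eq_sym.
by rewrite (inj_eq (addrI _)) => /eqP.
Qed.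

Lemma linZ (a : M -> F) k : lin_on <[g]>%VS a -> a (k *: g) = k * a g.
Proof.
move=> la; have := la k g 0 (memv_line g) (mem0v _).
by rewrite addr0 (lin0 la) addr0.
Qed.

Lemma wspaceP (a : M -> F) y : lin_on <[g]>%VS a ->
  (y \in wspace <[g]>%VS a) <-> (in_sl y /\ lie y g = a g *: y).
Proof.
move=> la; rewrite inE; split.
  case/andP=> -> /forallP /(_ g); rewrite memv_line /= => /eqP //.
case=> -> hy; apply/forallP => h; apply/implyP => /memg[k ->].
by rewrite lieZr hy linZ // scalerA.
Qed.


Definition P1 (z : M) := (1%:M - g) *m z *m (1%:M + g).
Definition P2 (z : M) := (1%:M + g) *m z *m (1%:M - g).

Lemma P1g z : P1 z *m g = P1 z.
Proof. by rewrite /P1 -mulmxA [(_ + g) *m g]mulmxDl mul1mx gg [g + _]addrC. Qed.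
Lemma gP1 z : g *m P1 z = - P1 z.
Proof. by rewrite /P1 !mulmxA [g *m (_ - g)]mulmxBr mulmx1 gg -[g - _]opprB !mulNmx. Qed.
Lemma P2g z : P2 z *m g = - P2 z.
Proof. by rewrite /P2 -mulmxA [(_ - g) *m g]mulmxBl mul1mx gg -[g - _]opprB mulmxN. Qed.
Lemma gP2 z : g *m P2 z = P2 z.
Proof. by rewrite /P2 !mulmxA [g *m (_ + g)]mulmxDr mulmx1 gg [g + _]addrC. Qed.

Lemma pm0 : (1%:M + g) *m (1%:M - g) = 0.
Proof. by rewrite mulmxBr mulmx1 mulmxDl mul1mx gg [g + _]addrC subrr. Qed.
Lemma mp0 : (1%:M - g) *m (1%:M + g) = 0.
Proof. by rewrite mulmxDr mulmx1 mulmxBl mul1mx gg addrA subrK subrr. Qed.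

Lemma trP1 z : in_sl (P1 z).
Proof. by rewrite /in_sl /P1 mxtrace_mulC mulmxA pm0 mul0mx mxtrace0. Qed.
Lemma trP2 z : in_sl (P2 z).
Proof. by rewrite /in_sl /P2 mxtrace_mulC mulmxA mp0 mul0mx mxtrace0. Qed.


Lemma decomp x : in_sl x ->
  x = (\tr (x *m g) / 2%:R) *: g + ((2%:R)^-1 * (2%:R)^-1) *: P1 x + ((2%:R)^-1 * (2%:R)^-1) *: P2 x.
Proof.
move=> xsl; set t := \tr (x *m g).
have hgx : g *m x = t *: 1%:M - x *m g by rewrite -(anticomm xsl gsl) addrC addKr.
have hgxg : g *m x *m g = t *: g - x.
  by rewrite hgx mulmxBl -scalemxAl mul1mx -mulmxA gg mulmx1.
rewrite /P1 /P2 !mulmxBl !mulmxDl !mul1mx !mulmxDr !mulmxN !mulmx1 hgxg.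
move: (x *m g) (g *m x) => u v.
have h2 := two_neq0.
apply/matrixP => i j; rewrite !mxE. field; exact: h2.
Qed.


Lemma wvec y mu : lie y g = mu *: y -> mu != 0 ->
  y *m g = (mu / 2%:R) *: y /\ g *m y = - ((mu / 2%:R) *: y).
Proof.
move=> h hmu.
have e1 : y - g *m y *m g = mu *: (y *m g).
  by have := congr1 (mulmx^~ g) h; rewrite /lie mulmxBl -(mulmxA y) gg mulmx1 -scalemxAl.
have e2 : g *m y *m g - y = mu *: (g *m y).
  by have := congr1 (mulmx g) h; rewrite /lie mulmxBr !mulmxA gg mul1mx -scalemxAr.
have e3 : mu *: (y *m g + g *m y) = 0.
  by rewrite scalerDr -e1 -e2 addrA subrK subrr.
have e4 : g *m y = - (y *m g).
  by move/eqP: e3; rewrite scaler_eq0 (negbTE hmu) /= addrC addr_eq0 => /eqP.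
have e5 : y *m g + y *m g = mu *: y by rewrite -h /lie e4 opprK.
have h2 := two_neq0.
have e6 : y *m g = (mu / 2%:R) *: y.
  by rewrite mulrC -scalerA -e5 -mulr2n -scaler_nat scalerA mulVf // scale1r.
by split => //; rewrite e4 e6.
Qed.

Lemma gnz : g != 0.
Proof.
apply/eqP => g0; move: gg; rewrite g0 mul0mx => /matrixP /(_ ord0 ord0).
by rewrite !mxE eqxx /= => /eqP; rewrite eq_sym oner_eq0.
Qed.

Lemma root_val (a : M -> F) : is_root <[g]>%VS a -> a g = 0 \/ (a g) ^+ 2 = 4%:R.
Proof.
case=> la [x /(wspaceP _ la) [xsl hx] xnz].
have [->|mnz] := eqVneq (a g) 0; first by left.
right; have [xg _] := wvec hx mnz.
set e := a g / 2%:R in xg.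
have : (e * e - 1) *: x = 0.
  by rewrite scalerBl scale1r -scalerA -xg scalemxAl -xg -mulmxA gg mulmx1 subrr.
move/eqP; rewrite scaler_eq0 (negbTE xnz) orbF subr_eq0 => /eqP ee.
have h2 := two_neq0.
have -> : a g = 2%:R * e by rewrite /e mulrC mulfVK.
by rewrite expr2 mulrACA ee mulr1 -natrM.
Qed.

Lemma bracket_line x y e : x *m g = e *: x -> y *m g = - (e *: y) ->
  in_sl x -> in_sl y -> lie x y = (- e * \tr (x *m y)) *: g.
Proof.
move=> hx hy xs ys.
have -> : lie x y = (lie x y *m g) *m g by rewrite -mulmxA gg mulmx1.
rewrite /lie mulmxBl -!mulmxA hx hy mulmxN -!scalemxAr -opprD -scalerDr (anticomm xs ys).
by rewrite scalerA mulNmx -scalemxAl mul1mx mulNr scaleNr.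
Qed.


Lemma trxP2 x0 z : x0 *m g = x0 -> g *m x0 = - x0 -> \tr (x0 *m P2 z) = 4%:R * \tr (x0 *m z).
Proof.
move=> h1 h2.
have e1 : x0 *m (1%:M + g) = 2%:R *: x0 by rewrite mulmxDr mulmx1 h1 scaler_nat mulr2n.
have e2 : (1%:M - g) *m x0 = 2%:R *: x0 by rewrite mulmxBl mul1mx h2 opprK scaler_nat mulr2n.
rewrite /P2 !mulmxA mxtrace_mulC !mulmxA e2 -scalemxAl e1 scalerA -scalemxAl mxtraceZ.
by rewrite -natrM.
Qed.

Lemma trxP1 x0 z : x0 *m g = - x0 -> g *m x0 = x0 -> \tr (x0 *m P1 z) = 4%:R * \tr (x0 *m z).
Proof.
move=> h1 h2.
have e1 : x0 *m (1%:M - g) = 2%:R *: x0 by rewrite mulmxBr mulmx1 h1 opprK scaler_nat mulr2n.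
have e2 : (1%:M + g) *m x0 = 2%:R *: x0 by rewrite mulmxDl mul1mx h2 scaler_nat mulr2n.
rewrite /P1 !mulmxA mxtrace_mulC !mulmxA e2 -scalemxAl e1 scalerA -scalemxAl mxtraceZ.
by rewrite -natrM.
Qed.


Lemma cc_a (x : M) : in_sl x -> exists s : seq ({ffun M -> F} * M),
        (forall q, q \in s -> lin_on <[g]>%VS q.1 /\ q.2 \in wspace <[g]>%VS q.1) /\
        x = \sum_(q <- s) q.2.
Proof.
move=> xsl.
pose af := [ffun h : M => \tr (h *m g)].
pose naf := [ffun h : M => - \tr (h *m g)].
pose i4 := ((2%:R : F)^-1 * (2%:R)^-1).
have l0 : lin_on <[g]>%VS ([ffun=> 0] : {ffun M -> F}).
  by move=> c y z _ _; rewrite !ffunE mulr0 addr0.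
have l1 : lin_on <[g]>%VS af.
  by move=> c y z _ _; rewrite !ffunE mulmxDl -scalemxAl mxtraceD mxtraceZ.
have l2 : lin_on <[g]>%VS naf.
  by move=> c y z _ _; rewrite !ffunE mulmxDl -scalemxAl mxtraceD mxtraceZ opprD mulrN.
exists [:: ([ffun=> 0], (\tr (x *m g) / 2%:R) *: g); (af, i4 *: P1 x); (naf, i4 *: P2 x)].
split; last by rewrite !big_cons big_nil /= addr0 addrA; exact: decomp.
move=> q; rewrite !in_cons in_nil orbF => /or3P [] /eqP -> /=.
- split=> //; apply (proj2 (wspaceP _ l0)); split; first exact/in_slZ/gsl.
  by rewrite ffunE scale0r; apply: lie_line; rewrite ?memvZ ?memv_line.
- split=> //; apply (proj2 (wspaceP _ l1)); split; first exact/in_slZ/trP1.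
  by rewrite lieZl /lie P1g gP1 opprK ffunE trgg -mulr2n -scaler_nat !scalerA mulrC.
- split=> //; apply (proj2 (wspaceP _ l2)); split; first exact/in_slZ/trP2.
  by rewrite lieZl /lie P2g gP2 ffunE trgg -opprD -mulr2n -scaler_nat scalerN scaleNr !scalerA mulrC.
Qed.


Lemma nz_g (a : M -> F) : lin_on <[g]>%VS a -> nonzero_on <[g]>%VS a -> a g != 0.
Proof.
move=> la [h /memg[k ->]]; rewrite linZ // mulf_eq0 negb_or => /andP[_ //].
Qed.

Lemma lin_neg (a : M -> F) : lin_on <[g]>%VS a -> lin_on <[g]>%VS (fun h => - a h).
Proof. by move=> la c x y hx hy; rewrite la // opprD mulrN. Qed.

Lemma cc_b (a : M -> F) : is_root <[g]>%VS a -> nonzero_on <[g]>%VS a ->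
      \dim <<[seq lie x y | x <- enum (wspace <[g]>%VS a),
                            y <- enum (wspace <[g]>%VS (fun h => - a h))]>>%VS = 1%N.
Proof.
move=> ra nza; have [la [x0 /(wspaceP _ la) [x0sl hx0] x0nz]] := ra.
have mnz := nz_g la nza.
have lna := lin_neg la.
have [x0g gx0] := wvec hx0 mnz.
set e := a g / 2%:R in x0g gx0.
have h2 := two_neq0.
have ag : a g = 2%:R * e by rewrite /e mulrC mulfVK.
have ee : e ^+ 2 = 1.
  case: (root_val ra) => [a0|]; first by rewrite a0 eqxx in mnz.
  rewrite ag exprMn -natrX => /eqP; rewrite -{2}[4%:R]mulr1 (inj_eq (mulfI four_neq0)) => /eqP //.
have wm y : y \in wspace <[g]>%VS (fun h => - a h) -> in_sl y /\ y *m g = - (e *: y).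
  case/(wspaceP _ lna) => ys hy; split=> //.
  have nz2 : - a g != 0 by rewrite oppr_eq0.
  have [yg _] := wvec hy nz2.
  by rewrite yg mulNr scaleNr.
set S := span _.
suff [y ym ynz] : exists2 y, y \in wspace <[g]>%VS (fun h => - a h) & lie x0 y != 0.
  have sub : (S <= <[g]>)%VS.
    apply/span_subvP => v /allpairsP [[x y'] [/= hx hy' ->]].
    rewrite mem_enum in hx; rewrite mem_enum in hy'.
    have [xsl' hx'] := (wspaceP _ la).1 hx.
    have [x'g _] := wvec hx' mnz.
    have [y'sl y'g] := wm _ hy'.
    by rewrite (bracket_line x'g y'g xsl' y'sl) memvZ // memv_line.
  apply/eqP; rewrite eqn_leq; apply/andP; split.
    by have := dimvS sub; rewrite dim_vline gnz.
  rewrite lt0n dimv_eq0; apply/negP => /eqP S0.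
  have : lie x0 y \in S.
    by apply: memv_span; apply: allpairs_f; rewrite mem_enum // (wspaceP _ la).
  by rewrite S0 memv0 (negbTE ynz).
have [z zsl tz] := nondeg x0sl x0nz.
have : e ^+ 2 == 1 by rewrite ee.
rewrite sqrf_eq1 => /orP [] /eqP e1.
- exists (P2 z).
    apply/(wspaceP _ lna); split; first exact: trP2.
    by rewrite /lie P2g gP2 ag e1 mulr1 -opprD -mulr2n -scaler_nat scaleNr.
  have [yg _] : P2 z *m g = - (e *: P2 z) /\ True by rewrite P2g e1 scale1r.
  rewrite (bracket_line x0g yg x0sl (trP2 z)) scaler_eq0 negb_or gnz andbT.
  rewrite e1; rewrite e1 scale1r in x0g; rewrite e1 scale1r in gx0.
  by rewrite trxP2 // !mulf_neq0 ?oppr_eq0 ?oner_eq0 ?four_neq0.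
- exists (P1 z).
    apply/(wspaceP _ lna); split; first exact: trP1.
    by rewrite /lie P1g gP1 ag e1 mulrN1 opprK opprK -mulr2n -scaler_nat.
  have [yg _] : P1 z *m g = - (e *: P1 z) /\ True by rewrite P1g e1 scaleN1r opprK.
  rewrite (bracket_line x0g yg x0sl (trP1 z)) scaler_eq0 negb_or gnz andbT.
  rewrite e1; rewrite e1 scaleN1r in x0g; rewrite e1 scaleN1r opprK in gx0.
  by rewrite trxP1 // !mulf_neq0 ?oppr_eq0 ?oner_eq0 ?four_neq0.
Qed.


Lemma cc_c (a b : M -> F) : is_root <[g]>%VS a -> is_root <[g]>%VS b -> nonzero_on <[g]>%VS b ->
      ~ (forall k : nat, (1 <= k <= p - 1)%N ->
           is_root <[g]>%VS (fun h => a h + k%:R * b h)).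
Proof.
move=> ra rb nzb hall.
have [lb _] := rb.
have bnz := nz_g lb nzb.
have b4 : b g ^+ 2 = 4%:R.
  by case: (root_val rb) => // b0; rewrite b0 eqxx in bnz.
have key k : (1 <= k <= 3)%N -> (a g + k%:R * b g = 0 \/ (a g + k%:R * b g) ^+ 2 = 4%:R).
  move=> hk; apply: (root_val (a := fun h => a h + k%:R * b h)); apply: hall; lia.
apply: (bad_val b4).
case: (root_val ra) => [a0|a4].
  by have := key 2%N isT; rewrite a0 add0r.
have : (a g - b g) * (a g + b g) == 0.
  by rewrite mulrDr !mulrBl [b g * a g]mulrC addrA subrK -!expr2 a4 b4 subrr.
rewrite mulf_eq0 => /orP [] /eqP h.
  have ab : a g = b g by apply/eqP; rewrite -subr_eq0 h.
  have := key 1%N isT; rewrite ab.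
  by have -> : b g + 1%:R * b g = 2%:R * b g by ring.
have ab : a g = - b g by apply/eqP; rewrite -addr_eq0 h.
have := key 3%N isT; rewrite ab.
by have -> : - b g + 3%:R * b g = 2%:R * b g by ring.
Qed.

Lemma cc_g : classical_cartan p <[g]>%VS.
Proof.
split.
- split; first split.
  + by move=> x /memg[k ->]; apply: in_slZ.
  + by move=> x y hx hy; rewrite (lie_line hx hy) mem0v.
  split; last exact: self_norm_g.
  exists 1%N => x [|y [|//]] //= _ hx /andP[hy _]; exact: lie_line.
- by move=> x y; apply: lie_line.
- exact: cc_a.
- exact: cc_b.
- exact: cc_c.
Qed.

End Sq1.
Lemma wvec_gen (h y : M) d mu : h *m h = d *: 1%:M -> lie y h = mu *: y -> mu != 0 ->
  y *m h = (mu / 2%:R) *: y.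
Proof.
move=> hh hl hmu.
have e1 : d *: y - h *m y *m h = mu *: (y *m h).
  have := congr1 (mulmx^~ h) hl; rewrite /lie mulmxBl -(mulmxA y) hh -scalemxAl.
  by rewrite -scalemxAr mulmx1.
have e2 : h *m y *m h - d *: y = mu *: (h *m y).
  have := congr1 (mulmx h) hl; rewrite /lie mulmxBr !mulmxA hh -scalemxAr.
  by rewrite -scalemxAl mul1mx.
have e3 : mu *: (y *m h + h *m y) = 0.
  by rewrite scalerDr -e1 -e2 addrA subrK subrr.
have e4 : h *m y = - (y *m h).
  by move/eqP: e3; rewrite scaler_eq0 (negbTE hmu) /= addrC addr_eq0 => /eqP.
have e5 : y *m h + y *m h = mu *: y by rewrite -hl /lie e4 opprK.
have h2 := two_neq0.
by rewrite mulrC -scalerA -e5 -mulr2n -scaler_nat scalerA mulVf // scale1r.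
Qed.

Lemma sl_not_abelian (H : {vspace M}) : lie_abelian H ->
  exists2 x, in_sl x & x \notin H.
Proof.
move=> ab.
have s01 : in_sl (delta_mx ord0 o1 : M) by rewrite /in_sl tr2 !mxE /= addr0.
have s10 : in_sl (delta_mx o1 ord0 : M) by rewrite /in_sl tr2 !mxE /= addr0.
case: (boolP (delta_mx ord0 o1 \in H)) => [h1|]; last by exists (delta_mx ord0 o1).
case: (boolP (delta_mx o1 ord0 \in H)) => [h2|]; last by exists (delta_mx o1 ord0).
have := ab _ _ h1 h2; move/matrixP/(_ ord0 ord0).
rewrite !mxE !big_ord_recl !big_ord0 !mxE /= !mulr0 !mulr1 !addr0 add0r subr0 => /eqP; by rewrite oner_eq0.
Qed.

Lemma cartan_line l (H : {vspace M}) : classical_cartan l H ->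
  exists g, [/\ in_sl g, g *m g = 1%:M & H = <[g]>%VS].
Proof.
case=> [[[Hsl Hlie] [_ Hsn]] Hab Ha _ _].
have [x xsl xnH] := sl_not_abelian Hab.
have [s [hs xs]] := Ha x xsl.
case: (boolP (all (fun q => q.2 \in H) s)) => [/allP hall|/allPn [q qs qn]].
  by case/negP: xnH; rewrite xs big_seq; apply: memv_suml => q /hall.
have [la] := hs q qs; set y := q.2 in qn *; set a := q.1.
rewrite inE => /andP [ysl /forallP ha].
case: (boolP [exists h, (h \in H) && (a h != 0)]) => [/existsP [h /andP [hH anz]]|hn]; last first.
  case/negP: qn; apply: Hsn => // h hH.
  have := ha h; rewrite hH /= => /eqP ->.
  have : ~~ ((h \in H) && (a h != 0)) by apply: contra hn => hh; apply/existsP; exists h.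
  by rewrite hH /= negbK => /eqP ->; rewrite scale0r mem0v.
have hsl := Hsl h hH.
have hh : h *m h = (\tr (h *m h) / 2%:R) *: 1%:M.
  have := anticomm hsl hsl; rewrite -mulr2n -scaler_nat => /(congr1 (fun m => (2%:R)^-1 *: m)).
  by rewrite !scalerA mulVf ?two_neq0 // scale1r mulrC.
set d := \tr (h *m h) / 2%:R in hh.
have hy : lie y h = a h *: y by apply/eqP; have := ha h; rewrite hH.
have yh := wvec_gen hh hy anz.
set e := a h / 2%:R in yh.
have h2 := two_neq0.
have enz : e != 0 by rewrite /e mulf_neq0 ?invr_eq0.
have ynz : y != 0 by apply: contraNneq qn => ->; rewrite mem0v.
have de : d = e * e.
  have : (d - e * e) *: y = 0.
    by rewrite scalerBl -[(e * e) *: y]scalerA -yh scalemxAl -yh -mulmxA hh -scalemxAr mulmx1 /d subrr.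
  by move/eqP; rewrite scaler_eq0 (negbTE ynz) orbF subr_eq0 => /eqP.
exists (e^-1 *: h); split.
- exact: in_slZ.
- by rewrite -scalemxAl -scalemxAr hh !scalerA de mulrACA mulVf // mulr1 scale1r.
have gg : (e^-1 *: h) *m (e^-1 *: h) = 1%:M.
  by rewrite -scalemxAl -scalemxAr hh !scalerA de mulrACA mulVf // mulr1 scale1r.
apply/vspaceP => v; apply/idP/idP => hv; last first.
  by case/vlineP: hv => k ->; rewrite memvZ // memvZ.
have vsl := Hsl v hv.
rewrite (comm_line (in_slZ _ hsl) gg vsl); first by rewrite memvZ // memv_line.
have := Hab _ _ hv hH; rewrite /lie => /eqP; rewrite subr_eq0 => /eqP hc.
by rewrite -scalemxAr hc scalemxAl.
Qed.

Definition pauli (c : F) (g0 g1 g2 : M) : Prop :=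
  [/\ c ^+ 2 = -1, [/\ in_sl g0, in_sl g1 & in_sl g2],
      [/\ g0 *m g0 = 1%:M, g1 *m g1 = 1%:M & g2 *m g2 = 1%:M] &
      [/\ g0 *m g1 = c *: g2, g1 *m g2 = c *: g0 & g2 *m g0 = c *: g1]].

Definition comb (g0 g1 g2 : M) (a0 a1 a2 : F) : M := a0 *: g0 + a1 *: g1 + a2 *: g2.

Definition gs (g0 g1 g2 : M) (i : 'I_3) : M :=
  match val i with 0 => g0 | 1 => g1 | _ => g2 end.

Lemma ord3P (i : 'I_3) :
  [\/ i = ord0, i = lift ord0 (ord0 : 'I_2) | i = lift ord0 (lift ord0 (ord0 : 'I_1))].
Proof. case: i => [[|[|[|//]]] Hi]; [apply: Or31|apply: Or32|apply: Or33]; exact: val_inj. Qed.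

Lemma sum3 (V : 'I_3 -> {vspace M}) :
  (\sum_i V i)%VS = (V ord0 + (V (lift ord0 (ord0 : 'I_2)) + V (lift ord0 (lift ord0 (ord0 : 'I_1)))))%VS.
Proof. by rewrite !big_ord_recl big_ord0 addv0. Qed.

Lemma sum3m (v : 'I_3 -> M) :
  \sum_i v i = v ord0 + (v (lift ord0 (ord0 : 'I_2)) + v (lift ord0 (lift ord0 (ord0 : 'I_1)))).
Proof. by rewrite !big_ord_recl big_ord0 addr0. Qed.

Section Pauli.
Variables (c : F) (g0 g1 g2 : M).
Hypothesis P : pauli c g0 g1 g2.

Let hc : c ^+ 2 = -1. Proof. by case: P. Qed.
Let s0 : in_sl g0. Proof. by case: P => _ []. Qed.
Let s1 : in_sl g1. Proof. by case: P => _ []. Qed.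
Let s2 : in_sl g2. Proof. by case: P => _ []. Qed.
Let q0 : g0 *m g0 = 1%:M. Proof. by case: P => _ _ []. Qed.
Let q1 : g1 *m g1 = 1%:M. Proof. by case: P => _ _ []. Qed.
Let q2 : g2 *m g2 = 1%:M. Proof. by case: P => _ _ []. Qed.
Let m01 : g0 *m g1 = c *: g2. Proof. by case: P => _ _ _ []. Qed.
Let m12 : g1 *m g2 = c *: g0. Proof. by case: P => _ _ _ []. Qed.
Let m20 : g2 *m g0 = c *: g1. Proof. by case: P => _ _ _ []. Qed.

Let t01 : \tr (g0 *m g1) = 0. Proof. by rewrite m01 mxtraceZ (eqP s2) mulr0. Qed.
Let t12 : \tr (g1 *m g2) = 0. Proof. by rewrite m12 mxtraceZ (eqP s0) mulr0. Qed.
Let t20 : \tr (g2 *m g0) = 0. Proof. by rewrite m20 mxtraceZ (eqP s1) mulr0. Qed.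
Let t10 : \tr (g1 *m g0) = 0. Proof. by rewrite mxtrace_mulC t01. Qed.
Let t21 : \tr (g2 *m g1) = 0. Proof. by rewrite mxtrace_mulC t12. Qed.
Let t02 : \tr (g0 *m g2) = 0. Proof. by rewrite mxtrace_mulC t20. Qed.

Let anti (x y : M) : in_sl x -> in_sl y -> \tr (x *m y) = 0 -> y *m x = - (x *m y).
Proof.
move=> xs ys t; have := anticomm xs ys; rewrite t scale0r => /eqP.
by rewrite addrC addr_eq0 => /eqP.
Qed.

Let m10 : g1 *m g0 = - (c *: g2). Proof. by rewrite (anti s0 s1 t01) m01. Qed.
Let m21 : g2 *m g1 = - (c *: g0). Proof. by rewrite (anti s1 s2 t12) m12. Qed.
Let m02 : g0 *m g2 = - (c *: g1). Proof. by rewrite (anti s2 s0 t20) m20. Qed.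

Lemma pauli_cnz : c != 0.
Proof.
apply/eqP => c0; move: hc; rewrite c0 expr0n /= => /eqP; rewrite eq_sym oppr_eq0.
by rewrite oner_eq0.
Qed.

Lemma mul_comb a0 a1 a2 b0 b1 b2 :
  comb g0 g1 g2 a0 a1 a2 *m comb g0 g1 g2 b0 b1 b2 =
  (a0 * b0 + a1 * b1 + a2 * b2) *: 1%:M +
  c *: comb g0 g1 g2 (a1 * b2 - a2 * b1) (a2 * b0 - a0 * b2) (a0 * b1 - a1 * b0).
Proof.
rewrite /comb !mulmxDl !mulmxDr -!scalemxAl -!scalemxAr.
rewrite q0 q1 q2 m01 m12 m20 m10 m21 m02.
apply/matrixP => i j; rewrite !mxE; ring.
Qed.

Lemma lie_comb a0 a1 a2 b0 b1 b2 :
  lie (comb g0 g1 g2 a0 a1 a2) (comb g0 g1 g2 b0 b1 b2) =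
  comb g0 g1 g2 (2%:R * c * (a1 * b2 - a2 * b1)) (2%:R * c * (a2 * b0 - a0 * b2))
     (2%:R * c * (a0 * b1 - a1 * b0)).
Proof.
rewrite /lie !mul_comb; rewrite /comb.
apply/matrixP => i j; rewrite !mxE; ring.
Qed.

Lemma comb_sl a0 a1 a2 : in_sl (comb g0 g1 g2 a0 a1 a2).
Proof. by rewrite /comb; do ?apply: in_slD; apply: in_slZ. Qed.

Definition cf (g : M) (x : M) := \tr (x *m g) / 2%:R.

Lemma cf_lin g k x y : cf g (k *: x + y) = k * cf g x + cf g y.
Proof. by rewrite /cf mulmxDl -scalemxAl mxtraceD mxtraceZ mulrDl mulrA. Qed.

Lemma cf_comb a0 a1 a2 :
  [/\ cf g0 (comb g0 g1 g2 a0 a1 a2) = a0, cf g1 (comb g0 g1 g2 a0 a1 a2) = a1 &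
      cf g2 (comb g0 g1 g2 a0 a1 a2) = a2].
Proof.
have h2 := two_neq0.
rewrite /cf /comb !mulmxDl -!scalemxAl !mxtraceD !mxtraceZ q0 q1 q2.
rewrite t01 t12 t20 t10 t21 t02 tr1 !mulr0 !addr0 !add0r.
by split; rewrite mulfK.
Qed.

Lemma span3 x : in_sl x -> x = comb g0 g1 g2 (cf g0 x) (cf g1 x) (cf g2 x).
Proof.
move=> xs.
set z := x - comb g0 g1 g2 (cf g0 x) (cf g1 x) (cf g2 x).
have zs : in_sl z by rewrite /z -scaleN1r in_slD // in_slZ // comb_sl.
have [c0 c1 c2] := cf_comb (cf g0 x) (cf g1 x) (cf g2 x).
have tz g : cf g z = 0 -> \tr (z *m g) = 0.
  by rewrite /cf => /eqP; rewrite mulf_eq0 invr_eq0 (negbTE two_neq0) orbF => /eqP.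
have z0 : \tr (z *m g0) = 0 by apply: tz; rewrite /z -scaleN1r addrC cf_lin c0 mulN1r addrC subrr.
have z1 : \tr (z *m g1) = 0 by apply: tz; rewrite /z -scaleN1r addrC cf_lin c1 mulN1r addrC subrr.
have z2 : \tr (z *m g2) = 0 by apply: tz; rewrite /z -scaleN1r addrC cf_lin c2 mulN1r addrC subrr.
have a0 := anti zs s0 z0; have a1 := anti zs s1 z1; have a2 := anti zs s2 z2.
have b0 : z *m g0 = - (g0 *m z) by rewrite a0 opprK.
have b1 : z *m g1 = - (g1 *m z) by rewrite a1 opprK.
have e : z *m (g0 *m g1) = (g0 *m g1) *m z.
  by rewrite mulmxA b0 mulNmx -[g0 *m z *m g1]mulmxA b1 mulmxN opprK mulmxA.
rewrite m01 -scalemxAr -scalemxAl a2 scalerN in e.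
have zg2 : z *m g2 = 0.
  move/eqP: e; rewrite -addr_eq0 -mulr2n -scaler_nat scalerA scaler_eq0.
  by rewrite mulf_eq0 (negbTE two_neq0) (negbTE pauli_cnz) /= => /eqP.
have : z = 0 by rewrite -[z]mulmx1 -q2 mulmxA zg2 mul0mx.
by move/eqP; rewrite /z subr_eq0 => /eqP.
Qed.


Lemma gs_tr i j : i != j -> \tr (gs g0 g1 g2 i *m gs g0 g1 g2 j) = 0.
Proof.
by case: (ord3P i) => ->; case: (ord3P j) => -> //= _.
Qed.

Lemma gs_sl i : in_sl (gs g0 g1 g2 i).
Proof. by case: (ord3P i) => ->. Qed.

Lemma gs_sq i : gs g0 g1 g2 i *m gs g0 g1 g2 i = 1%:M.
Proof. by case: (ord3P i) => ->. Qed.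

Lemma pauli_cod : COD p (fun i => <[gs g0 g1 g2 i]>%VS).
Proof.
split.
- move=> x; rewrite sum3 /=; split => [xs|].
    rewrite (span3 xs) /comb -addrA.
    by apply: memv_add; [|apply: memv_add]; apply: memvZ; apply: memv_line.
  case/memv_addP => u /vlineP [k ->] [v /memv_addP [w /vlineP [k1 ->] [y /vlineP [k2 ->] ->]] ->].
  by rewrite addrA; have := comb_sl k k1 k2; rewrite /comb.
- apply/directv_sum_independent => us hus hsum i _.
  have [k0 e0] := vlineP _ _ (hus ord0 isT).
  have [k1 e1] := vlineP _ _ (hus (lift ord0 (ord0 : 'I_2)) isT).
  have [k2 e2] := vlineP _ _ (hus (lift ord0 (lift ord0 (ord0 : 'I_1))) isT).
  rewrite /gs /= in e0 e1 e2.
  rewrite sum3m e0 e1 e2 addrA in hsum.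
  have [c0 c1 c2] := cf_comb k0 k1 k2.
  rewrite /comb hsum in c0 c1 c2.
  rewrite /cf mul0mx mxtrace0 mul0r in c0.
  rewrite /cf mul0mx mxtrace0 mul0r in c1.
  rewrite /cf mul0mx mxtrace0 mul0r in c2.
  by case: (ord3P i) => ->; rewrite ?e0 ?e1 ?e2 -?c0 -?c1 -?c2 scale0r.
- move=> i; apply: cc_g; [exact: gs_sl | exact: gs_sq].
- move=> i j x y ij /vlineP [k ->] /vlineP [k' ->].
  by rewrite /killing -scalemxAl -scalemxAr !mxtraceZ gs_tr // !mulr0.
Qed.

Lemma cf_gs i j : cf (gs g0 g1 g2 j) (gs g0 g1 g2 i) = (i == j)%:R.
Proof.
have h2 := two_neq0.
case: (ord3P i) => ->; case: (ord3P j) => -> /=;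
  rewrite /cf ?q0 ?q1 ?q2 ?tr1 ?divff // ?t01 ?t12 ?t20 ?t10 ?t21 ?t02 mul0r //.
Qed.

End Pauli.

Lemma cod_pauli (H : 'I_3 -> {vspace M}) : COD p H ->
  exists c g0 g1 g2, pauli c g0 g1 g2 /\ forall i, H i = <[gs g0 g1 g2 i]>%VS.
Proof.
case=> hspan _ hcc hort.
have [g0 [s0 q0 e0]] := cartan_line (hcc ord0).
have [g1 [s1 q1 e1]] := cartan_line (hcc (lift ord0 (ord0 : 'I_2))).
have [g2 [s2 q2 e2]] := cartan_line (hcc (lift ord0 (lift ord0 (ord0 : 'I_1)))).
have HE i : H i = <[gs g0 g1 g2 i]>%VS by case: (ord3P i) => ->.
have orth i j : i != j -> \tr (gs g0 g1 g2 i *m gs g0 g1 g2 j) = 0.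
  move=> ij; have := hort i j _ _ ij; rewrite !HE => /(_ _ _ (memv_line _) (memv_line _)).
  rewrite /killing => /eqP; rewrite mulf_eq0 => /orP [|/eqP //].
  by have := four_neq0 => /negbTE ->.
have t01 : \tr (g0 *m g1) = 0 by apply: (orth ord0 (lift ord0 (ord0 : 'I_2))).
have t02 : \tr (g0 *m g2) = 0 by apply: (orth ord0 (lift ord0 (lift ord0 (ord0 : 'I_1)))).
have t12 : \tr (g1 *m g2) = 0.
  by apply: (orth (lift ord0 (ord0 : 'I_2)) (lift ord0 (lift ord0 (ord0 : 'I_1)))).
have t21 : \tr (g2 *m g1) = 0 by rewrite mxtrace_mulC.
have anti (x y : M) : in_sl x -> in_sl y -> \tr (x *m y) = 0 -> y *m x = - (x *m y).
  move=> xs ys t; have := anticomm xs ys; rewrite t scale0r => /eqP.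
  by rewrite addrC addr_eq0 => /eqP.
have m10 := anti _ _ s0 s1 t01.
have sl01 : in_sl (g0 *m g1) by rewrite /in_sl t01.
have := (hspan _).1 sl01; rewrite sum3 !HE /=.
case/memv_addP => _ /vlineP [k0 ->] [_ /memv_addP [_ /vlineP [k1 ->] [_ /vlineP [c ->] ->]] e].
have h2 := two_neq0.
have k00 : k0 = 0.
  have := congr1 (fun m => \tr (g0 *m m)) e; rewrite /= mulmxA q0 mul1mx (eqP s1).
  rewrite !mulmxDr -!scalemxAr !mxtraceD !mxtraceZ q0 tr1 t01 t02 !mulr0 !addr0.
  by move/eqP; rewrite eq_sym mulf_eq0 (negbTE h2) orbF => /eqP.
have k10 : k1 = 0.
  have := congr1 (fun m => \tr (m *m g1)) e; rewrite /= -mulmxA q1 mulmx1 (eqP s0).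
  rewrite !mulmxDl -!scalemxAl !mxtraceD !mxtraceZ q1 tr1 t01 t21 !mulr0 add0r addr0.
  by move/eqP; rewrite eq_sym mulf_eq0 (negbTE h2) orbF => /eqP.
rewrite k00 k10 !scale0r !add0r in e.
have cc : c ^+ 2 = -1.
  have : (g0 *m g1) *m (g0 *m g1) = - 1%:M.
    by rewrite -mulmxA [g1 *m _]mulmxA m10 mulNmx mulmxN -mulmxA q1 mulmx1 q0.
  rewrite e -scalemxAl -scalemxAr q2 scalerA => /matrixP /(_ ord0 ord0).
  by rewrite !mxE eqxx /= mulr1 expr2.
have cnz : c != 0.
  apply/eqP => c0; move: cc; rewrite c0 expr0n /= => /eqP; rewrite eq_sym oppr_eq0.
  by rewrite oner_eq0.
have ci : c^-1 = - c.
  apply: (mulfI cnz); rewrite mulfV // mulrN -expr2 cc opprK //.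
have g2e : g2 = c^-1 *: (g0 *m g1) by rewrite e scalerA mulVf // scale1r.
exists c, g0, g1, g2; split => //; split => //.
- split => //.
  + by rewrite g2e -scalemxAr mulmxA m10 mulNmx -mulmxA q1 mulmx1 scalerN ci scaleNr opprK.
  + rewrite g2e -scalemxAl -mulmxA m10 mulmxN mulmxA q0 mul1mx scalerN ci scaleNr opprK //.
Qed.

Lemma pauli_neg c g0 g1 g2 : pauli c g0 g1 g2 -> pauli (- c) g0 g1 (- g2).
Proof.
case=> hc [s0 s1 s2] [q0 q1 q2] [m01 m12 m20]; split.
- by rewrite sqrrN.
- by split => //; rewrite -scaleN1r; apply: in_slZ.
- by split => //; rewrite mulmxN mulNmx opprK.
- split.
  + by rewrite m01 scalerN scaleNr opprK.
  + by rewrite mulmxN m12 scaleNr.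
  + by rewrite mulNmx m20 scaleNr.
Qed.

Lemma line_neg (v : M) : <[- v]>%VS = <[v]>%VS.
Proof.
apply/vspaceP => x; apply/vlineP/vlineP => [[k ->]|[k ->]]; exists (- k);
  by rewrite ?scalerN scaleNr ?opprK.
Qed.

Lemma conj_pauli c g0 g1 g2 h0 h1 h2 (H H' : 'I_3 -> {vspace M}) :
  pauli c g0 g1 g2 -> pauli c h0 h1 h2 ->
  (forall i, H i = <[gs g0 g1 g2 i]>%VS) -> (forall i, H' i = <[gs h0 h1 h2 i]>%VS) ->
  COD_conjugate H H'.
Proof.
move=> Pg Ph HE HE'.
pose f x := comb h0 h1 h2 (cf g0 x) (cf g1 x) (cf g2 x).
have fcomb a0 a1 a2 : f (comb g0 g1 g2 a0 a1 a2) = comb h0 h1 h2 a0 a1 a2.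
  by rewrite /f; case: (cf_comb Pg a0 a1 a2) => -> -> ->.
have fZ k x : f (k *: x) = k *: f x.
  rewrite /f /cf /comb -!scalemxAl !mxtraceZ.
  by apply/matrixP => i j; rewrite !mxE; ring.
have fgs i : f (gs g0 g1 g2 i) = gs h0 h1 h2 i.
  rewrite /f; case: (ord3P i) => -> /=.
  - rewrite (cf_gs Pg ord0 ord0) (cf_gs Pg ord0 (lift ord0 (ord0 : 'I_2))).
    rewrite (cf_gs Pg ord0 (lift ord0 (lift ord0 (ord0 : 'I_1)))) /comb /=.
    by rewrite scale1r !scale0r !addr0.
  - rewrite (cf_gs Pg (lift ord0 (ord0 : 'I_2)) ord0) (cf_gs Pg (lift ord0 (ord0 : 'I_2)) (lift ord0 (ord0 : 'I_2))).
    rewrite (cf_gs Pg (lift ord0 (ord0 : 'I_2)) (lift ord0 (lift ord0 (ord0 : 'I_1)))) /comb /=.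
    by rewrite scale1r !scale0r add0r addr0.
  - rewrite (cf_gs Pg (lift ord0 (lift ord0 (ord0 : 'I_1))) ord0).
    rewrite (cf_gs Pg (lift ord0 (lift ord0 (ord0 : 'I_1))) (lift ord0 (ord0 : 'I_2))).
    rewrite (cf_gs Pg (lift ord0 (lift ord0 (ord0 : 'I_1))) (lift ord0 (lift ord0 (ord0 : 'I_1)))) /comb /=.
    by rewrite scale1r !scale0r !add0r.
exists f; split.
- split.
  + by move=> x _; apply: (comb_sl Ph).
  + move=> k x y _ _; rewrite /f !cf_lin /comb.
    by apply/matrixP => i j; rewrite !mxE; ring.
  + move=> x y xs ys.
    rewrite {1}(span3 Pg xs) {1}(span3 Pg ys) (lie_comb Pg) fcomb /f (lie_comb Ph) //.
  + move=> x y xs ys fe.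
    case: (cf_comb Ph (cf g0 x) (cf g1 x) (cf g2 x)) => x0 x1 x2.
    case: (cf_comb Ph (cf g0 y) (cf g1 y) (cf g2 y)) => y0 y1 y2.
    have E0 : cf g0 x = cf g0 y by have := congr1 (cf h0) fe; rewrite /f x0 y0.
    have E1 : cf g1 x = cf g1 y by have := congr1 (cf h1) fe; rewrite /f x1 y1.
    have E2 : cf g2 x = cf g2 y by have := congr1 (cf h2) fe; rewrite /f x2 y2.
    by rewrite (span3 Pg xs) (span3 Pg ys) E0 E1 E2.
  + move=> y ys; exists (comb g0 g1 g2 (cf h0 y) (cf h1 y) (cf h2 y)); first exact: (comb_sl Pg).
    by rewrite fcomb -(span3 Ph ys).
- exists id => i y; rewrite HE HE' /=; split.
  + case/vlineP => k ->; exists (k *: gs g0 g1 g2 i); first by rewrite memvZ // memv_line.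
    by rewrite fZ fgs.
  + by case=> x /vlineP [k ->] <-; rewrite fZ fgs memvZ // memv_line.
Qed.

Lemma one_neqN1 : (1 : F) != -1.
Proof. by rewrite -addr_eq0 -(natrD _ 1 1) two_neq0. Qed.

Lemma sqrtN1_mod (c : F) : c ^+ 2 = -1 -> (#|F| = 1 %[mod 4])%N.
Proof.
move=> hc.
have c4 : c ^+ 4 = 1 by rewrite (exprM c 2 2) hc sqrrN expr1n.
have cnz : c != 0.
  apply/eqP => c0; move: hc; rewrite c0 expr0n /= => /eqP; rewrite eq_sym oppr_eq0.
  by rewrite oner_eq0.
suff h : (#|F| %% 4 = 1)%N by rewrite h.
have := expf_card c; rewrite {1}(divn_eq #|F| 4) exprD mulnC exprM c4 expr1n mul1r.
have : (#|F| %% 4 < 4)%N by rewrite ltn_mod.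
case: (#|F| %% 4)%N => [|[|[|[|//]]]] _ //=.
- move=> c1; move: hc; rewrite -c1 expr1n => /eqP; by rewrite (negbTE one_neqN1).
- rewrite hc => c1; move: hc; rewrite -c1 sqrrN expr1n => /eqP; by rewrite (negbTE one_neqN1).
- rewrite exprS hc mulrN1 => /eqP; rewrite eq_sym -addr_eq0 -mulr2n -mulr_natl mulf_eq0.
  by rewrite (negbTE two_neq0) (negbTE cnz).
Qed.

Lemma mod_sqrtN1 : (#|F| = 1 %[mod 4])%N -> exists c : F, c ^+ 2 = -1.
Proof.
move=> hq.
set n := (#|F|).-1.
have qpos : (0 < #|F|)%N by apply/card_gt0P; exists 0.
have hn : (n = 4 * (#|F| %/ 4))%N.
  by rewrite /n {1}(divn_eq #|F| 4) hq mulnC addn1.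
have npos : (0 < n)%N by rewrite /n -(cardC1 (0 : F)); apply/card_gt0P; exists 1; rewrite !inE oner_eq0.
set m := (#|F| %/ 4)%N in hn.
have mpos : (0 < m)%N by move: npos; rewrite hn muln_gt0 => /andP[].
have rsn : all n.-unity_root (enum (predC1 (0 : F))).
  apply/allP => x; rewrite mem_enum !inE => xnz; rewrite unity_rootE.
  have := expf_card x; rewrite -(prednK qpos) exprSr -/n => /eqP.
  by rewrite -[X in _ == X]mul1r => /eqP /(mulIf xnz) ->.
have := has_prim_root npos rsn (enum_uniq _); rewrite -cardE cardC1 leqnn => /(_ isT).
case/hasP => w _ pw.
exists (w ^+ m); rewrite -exprM.
have : (w ^+ (m * 2)) ^+ 2 == 1 by rewrite -exprM -mulnA -[(m * (2 * 2))%N]mulnC -hn prim_expr_order.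
rewrite sqrf_eq1 => /orP [|/eqP //].
rewrite -(prim_order_dvd pw) hn => /dvdn_leq; rewrite muln_gt0 mpos /= => /(_ isT).
by rewrite mulnC leq_pmul2l.
Qed.

Lemma pauli_of (c : F) (g0 g1 : M) : c ^+ 2 = -1 -> in_sl g0 -> in_sl g1 ->
  g0 *m g0 = 1%:M -> g1 *m g1 = 1%:M -> \tr (g0 *m g1) = 0 ->
  pauli c g0 g1 (c^-1 *: (g0 *m g1)).
Proof.
move=> cc s0 s1 q0 q1 t01.
have m10 : g1 *m g0 = - (g0 *m g1).
  have := anticomm s0 s1; rewrite t01 scale0r => /eqP.
  by rewrite addrC addr_eq0 => /eqP.
have cnz : c != 0.
  apply/eqP => c0; move: cc; rewrite c0 expr0n /= => /eqP; rewrite eq_sym oppr_eq0.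
  by rewrite oner_eq0.
have ci : c^-1 = - c.
  apply: (mulfI cnz); rewrite mulfV // mulrN -expr2 cc opprK //.
have sq : (g0 *m g1) *m (g0 *m g1) = - 1%:M.
  by rewrite -mulmxA [g1 *m _]mulmxA m10 mulNmx mulmxN -mulmxA q1 mulmx1 q0.
split => //.
- split => //; apply: in_slZ; by rewrite /in_sl t01.
- split => //.
  by rewrite -scalemxAl -scalemxAr sq scalerA ci mulrNN -expr2 cc scaleN1r opprK.
- split.
  + by rewrite scalerA mulfV // scale1r.
  + by rewrite -scalemxAr mulmxA m10 mulNmx -mulmxA q1 mulmx1 scalerN ci scaleNr opprK.
  + rewrite -scalemxAl -mulmxA m10 mulmxN mulmxA q0 mul1mx scalerN ci scaleNr opprK //.
Qed.

Definition pz0 : M := delta_mx ord0 ord0 - delta_mx o1 o1.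
Definition px1 : M := delta_mx ord0 o1 + delta_mx o1 ord0.

Lemma pauli_ex (c : F) : c ^+ 2 = -1 -> pauli c pz0 px1 (c^-1 *: (pz0 *m px1)).
Proof.
move=> cc; apply: pauli_of => //.
- by rewrite /in_sl tr2 /pz0 !mxE /=; apply/eqP; ring.
- by rewrite /in_sl tr2 /px1 !mxE /=; apply/eqP; ring.
- rewrite /pz0; mx2; ring.
- rewrite /px1; mx2; ring.
- rewrite tr2 /pz0 /px1 !mxE !big_ord_recl !big_ord0 !mxE /=; ring.
Qed.

End S.

Unset Implicit Arguments.
Set Strict Implicit.

Theorem corollary3p3 (F : finFieldType) (p : nat) (hp : p \in [pchar F])
    (hp3 : (3 < p)%N) :
  ((exists H : 'I_3 -> {vspace 'M[F]_2}, COD p H) /\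
   (forall H H' : 'I_3 -> {vspace 'M[F]_2}, COD p H -> COD p H' ->
      COD_conjugate H H'))
  <-> (#|F| = 1 %[mod 4])%N.
Proof.
split.
- case=> [[H hH] _].
  have [c [g0 [g1 [g2 [Pg _]]]]] := cod_pauli hp hp3 hH.
  case: Pg => hc _ _ _; exact: (sqrtN1_mod hp hp3 hc).
- move=> hq; have [c hc] := mod_sqrtN1 hq; split.
    exists (fun i => <[gs (pz0 F) (px1 F) (c^-1 *: (pz0 F *m px1 F)) i]>%VS).
    exact: (pauli_cod hp hp3 (pauli_ex hc)).
  move=> H H' hH hH'.
  have [c1 [a0 [a1 [a2 [Pa HA]]]]] := cod_pauli hp hp3 hH.
  have [c2 [b0 [b1 [b2 [Pb HB]]]]] := cod_pauli hp hp3 hH'.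
  have : (c2 - c1) * (c2 + c1) == 0.
    case: Pa => h1 _ _ _; case: (Pb) => h2 _ _ _.
    by rewrite mulrDr !mulrBl [c1 * c2]mulrC addrA subrK -!expr2 h1 h2 subrr.
  rewrite mulf_eq0 => /orP [] /eqP e.
    have ec : c2 = c1 by apply/eqP; rewrite -subr_eq0 e.
    rewrite ec in Pb; exact: (conj_pauli hp hp3 Pa Pb HA HB).
  have ec : - c2 = c1 by apply/eqP; rewrite eq_sym -addr_eq0 addrC e.
  have Pb' := pauli_neg Pb; rewrite ec in Pb'.
  apply: (conj_pauli hp hp3 Pa Pb' HA) => i.
  by rewrite HB; case: (ord3P i) => -> //=; rewrite line_neg.
Qed.
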